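(* For every CABA framework $F_c$, $\mathit{GrCInst}(\mathit{CArg})=\mathit{Arg}_c$ modulo ground constraints; that is, every ground constrained instance of a constrained argument of $F_c$ is equal modulo ground constraints to some argument of $\mathit{Ground}(F_c)$, and every argument of $\mathit{Ground}(F_c)$ is equal modulo ground constraints to some ground constrained instance of a constrained argument of $F_c$.
   Context: Conventions. $\mathsf X$: tuple of variables; $\mathsf t$: tuple of terms. A substitution $\vartheta=\{X_1/t_1,\dots,X_n/t_n\}$ maps distinct variables to terms; $e\vartheta$ replaces each $X_i$ by $t_i$; $\{\mathsf X/\mathsf t\}$ maps $\mathsf X$ componentwise to $\mathsf t$. An object is ground if it has no variables; $\vartheta$ is grounding for $e$ if $e\vartheta$ is ground. Theory of constraints. $\mathcal{CT}$ is a first-order theory with equality (identity on its domain, including the Clark Equality Theory) whose atomic formulas form the set $\mathcal C$ of constraints; a finite set $\{c_1,\dots,c_n\}\subseteq\mathcal C$ is consistent if $\mathcal{CT}\models\exists(c_1\wedge\dots\wedge c_n)$. CABA framework $F_c=\langle\mathcal L_c,\mathcal C,\mathcal R,\mathcal{CT},\mathcal A,\overline{\cdot}\rangle$: $\mathcal L_c$ a set of atoms; $\mathcal C\subseteq\mathcal L_c$ the constraints; $\mathcal R$ rules $s_0\leftarrow s_1,\dots,s_m$ ($s_0\in\mathcal L_c\setminus\mathcal C$, $s_i\in\mathcal L_c$) in normalised form $p(\mathsf X_0)\leftarrow C,p_1(\mathsf X_1),\dots,p_m(\mathsf X_m)$ ($C\subseteq\mathcal C$, each $\mathsf X_i$ a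 tuple of distinct variables); $\mathcal A\subseteq\mathcal L_c\setminus\mathcal C$ nonempty assumptions, not heads of rules; $\overline\cdot:\mathcal A\to\mathcal L_c\setminus\mathcal C$ total with $\overline{p(\mathsf t)}=cp(\mathsf t)$ for a fixed predicate $cp$ per assumption predicate $p$; $\mathcal L_c,\mathcal C,\mathcal A$ predicate closed. Constrained arguments. A tight constrained argument $C\cup A\vdash_R s$ (consistent $C\subseteq\mathcal C$, $A\subseteq\mathcal A$, $R\subseteq\mathcal R$, $s\in\mathcal L_c\setminus\mathcal C$) is a finite tree with root $s$, each non-leaf node $p(\mathsf t)$ having as children exactly $s_1\vartheta,\dots,s_m\vartheta$ for exactly one renamed-apart copy $p(\mathsf X)\leftarrow s_1,\dots,s_m$ of a rule of $R$ with $\vartheta=\{\mathsf X/\mathsf t\}$ (or the single child true for a fact), each leaf a constraint of $C$, an assumption of $A$ or true; $C,A,R$ are exactly those occurring/used. A constrained argument is $C\vartheta\cup D\cup A\vartheta\vdash_R s\vartheta$ for some tight $C\cup A\vdash_R s$, substitution $\vartheta$ and $D\subseteq\mathcal C$ with $C\vartheta\cup D$ consistent; a constrained instance of a constrained argument $C\cup A\vdash_R s$ (via $\vartheta$, $D$) is $C\vartheta\cup D\cup A\vartheta\vdash_R s\vartheta$ with $C\vartheta\cup D$ consistent. $\mathit{CArg}$: set of all constrained arguments; $\mathit{GrCInst}(\alpha)$: ground constrained instances of $\alpha$; $\mathit{GrCInst}(\Gamma)=\bigcup_{\alpha\in\Gamma}\mathit{GrCInst}(\alpha)$. ABA and grounding.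 An argument $A\vdash_R s$ of an ABA framework $\langle\mathcal L,\mathcal R,\mathcal A,\overline\cdot\rangle$ is a finite tree with root $s$, each non-leaf node $s'$ having as children exactly the body elements of one rule of $R$ with head $s'$ (or the single child true for a fact), each leaf an assumption in $A$ or true. $\mathit{Ground}(F_c)=\langle\mathcal L_{cg},\mathcal R_g,\mathcal A_g,\overline\cdot\rangle$: $\mathcal L_{cg}$ the ground atoms of $\mathcal L_c$; $\mathcal R_g$ all ground instances of rules of $\mathcal R$ plus the facts $c\leftarrow$ for ground $c\in\mathcal C$ with $\mathcal{CT}\models c$; $\mathcal A_g$ the ground assumptions; contraries inherited. $\mathit{Arg}_c$ is the set of all arguments of $\mathit{Ground}(F_c)$. Equality modulo ground constraints. For ground atoms, $\mathcal{CT}\models p(\mathsf t)\leftrightarrow p(\mathsf t')$ means $\mathcal{CT}\models\mathsf t=\mathsf t'$; for ground sets of atoms $A,A'$, $\mathcal{CT}\models\bigwedge A\leftrightarrow\bigwedge A'$ means every atom of each set is so equivalent to some atom of the other. Two ground arguments with (non-constraint) assumption sets $A,A'$ and claims $s,s'$ are equal modulo ground constraints if $\mathcal{CT}\models\bigwedge A\leftrightarrow\bigwedge A'$ and $\mathcal{CT}\models s\leftrightarrow s'$ (ground constraints in the supports are disregarded). *)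

(* Defs.v *)
From Stdlib Require Import List Arith.
Import ListNotations.
Set Implicit Arguments.

Section Syntax.
Variables (Fsym Psym : Type).

(* first-order terms over function symbols Fsym (constants = 0-ary symbols);
   variables are natural numbers *)
Inductive term : Type :=
| Var : nat -> term
| Fn : Fsym -> list term -> term.

Definition atom : Type := (Psym * list term)%type.

Record rule : Type := mkRule { head : atom; body : list atom }.

Fixpoint vars_term (t : term) : list nat :=
  match t with
  | Var x => [x]
  | Fn _ l => flat_map vars_term l
  end.
Definition vars_atom (a : atom) : list nat := flat_map vars_term (snd a).
Definition vars_rule (r : rule) : list nat :=
  vars_atom (head r) ++ flat_map vars_atom (body r).

Definition ground_term (t : term) : Prop := vars_term t = [].
Definition ground_atom (a : atom) : Prop := vars_atom a = [].
Definition ground_rule (r : rule) : Prop := vars_rule r = [].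

Fixpoint tsubstf (s : nat -> term) (t : term) : term :=
  match t with
  | Var x => s x
  | Fn f l => Fn f (map (tsubstf s) l)
  end.
Definition asubstf (s : nat -> term) (a : atom) : atom :=
  (fst a, map (tsubstf s) (snd a)).
Definition rsubstf (s : nat -> term) (r : rule) : rule :=
  mkRule (asubstf s (head r)) (map (asubstf s) (body r)).

Definition subst : Type := list (nat * term).
Definition is_subst (th : subst) : Prop := NoDup (map fst th).
Fixpoint lookup (th : subst) (x : nat) : term :=
  match th with
  | [] => Var x
  | (y, t) :: th' => if Nat.eqb x y then t else lookup th' x
  end.
Definition tsubst (th : subst) := tsubstf (lookup th).
Definition asubst (th : subst) := asubstf (lookup th).
Definition rsubst (th : subst) := rsubstf (lookup th).

Definition rename_rule (rho : nat -> nat) (r : rule) : rule :=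
  rsubstf (fun x => Var (rho x)) r.

Record structure : Type := {
  dom : Type;
  fI : Fsym -> list dom -> dom;
  pI : Psym -> list dom -> Prop }.

Fixpoint eval (M : structure) (v : nat -> dom M) (t : term) : dom M :=
  match t with
  | Var x => v x
  | Fn f l => fI M f (map (eval M v) l)
  end.

Definition sat_atom (M : structure) (v : nat -> dom M) (a : atom) : Prop :=
  pI M (fst a) (map (eval M v) (snd a)).

Inductive formula : Type :=
| FAtom : atom -> formula
| FNot : formula -> formula
| FAnd : formula -> formula -> formula
| FAll : nat -> formula -> formula.

Fixpoint atoms_of (phi : formula) : list atom :=
  match phi with
  | FAtom a => [a]
  | FNot p => atoms_of p
  | FAnd p q => atoms_of p ++ atoms_of q
  | FAll _ p => atoms_of p
  end.

Definition upd (M : structure) (v : nat -> dom M) (x : nat) (d : dom M) :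
  nat -> dom M := fun y => if Nat.eqb y x then d else v y.

Fixpoint sat (M : structure) (v : nat -> dom M) (phi : formula) : Prop :=
  match phi with
  | FAtom a => sat_atom M v a
  | FNot p => ~ sat M v p
  | FAnd p q => sat M v p /\ sat M v q
  | FAll x p => forall d : dom M, sat M (upd M v x d) p
  end.

(* TTrue is the leaf "true"; TLeaf a a leaf labelled a; TNode a n kids a
   non-leaf node labelled a, annotated with n (the rule used) *)
Inductive tree (N : Type) : Type :=
| TTrue : tree N
| TLeaf : atom -> tree N
| TNode : atom -> N -> list (tree N) -> tree N.
Arguments TTrue {N}.
Arguments TLeaf {N}.
Arguments TNode {N}.

Fixpoint subtrees (N : Type) (t : tree N) : list (tree N) :=
  t :: match t with
       | TNode _ _ kids => flat_map (@subtrees N) kids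
       | _ => []
       end.

Definition root (N : Type) (t : tree N) : option atom :=
  match t with
  | TTrue => None
  | TLeaf a => Some a
  | TNode a _ _ => Some a
  end.

Definition leaf_atoms (N : Type) (t : tree N) : list atom :=
  flat_map (fun s => match s with TLeaf a => [a] | _ => [] end) (subtrees t).

Definition annots (N : Type) (t : tree N) : list N :=
  flat_map (fun s => match s with TNode _ n _ => [n] | _ => [] end) (subtrees t).

(* children of a node are exactly the (instantiated) body elements,
   or the single child "true" for a fact *)
Definition kids_match (N : Type) (bd : list atom) (kids : list (tree N)) : Prop :=
  match bd with
  | [] => kids = [TTrue]
  | _ => map (@root N) kids = map Some bd
  end.

End Syntax.

Arguments Var {Fsym}.
Arguments TTrue {Fsym Psym N}.
Arguments TLeaf {Fsym Psym N}.
Arguments TNode {Fsym Psym N}.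

(* L_c, C, A are predicate closed, hence given by sets of predicates. *)
Record caba (Fsym Psym : Type) : Type := {
  Lp : Psym -> Prop;
  Cp : Psym -> Prop;
  eqP : Psym;
  CT : formula Fsym Psym -> Prop;
  Rl : rule Fsym Psym -> Prop;
  Ap : Psym -> Prop;
  ctr : Psym -> Psym
}.

Section CABA.
Variables (Fsym Psym : Type) (F : caba Fsym Psym).

Notation atom := (atom Fsym Psym).
Notation rule := (rule Fsym Psym).
Notation structure := (structure Fsym Psym).

Definition model (M : structure) : Prop :=
  inhabited (dom M) /\
  (forall a b : dom M, pI M (eqP F) [a; b] <-> a = b) /\
  (forall phi, CT F phi -> forall v, sat M v phi).

Definition entails (c : atom) : Prop :=
  forall M, model M -> forall v, sat_atom M v c.

(* a finite set of constraints is consistent: CT |= exists(c1 /\ ... /\ cn) *)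
Definition consistent (cs : list atom) : Prop :=
  forall M, model M -> exists v, forall c, In c cs -> sat_atom M v c.

Definition entails_eq (t t' : term Fsym) : Prop := entails (eqP F, [t; t']).

Definition includes_CET : Prop :=
  forall M, model M ->
    (forall f g (l l' : list (dom M)), fI M f l = fI M g l' -> f = g /\ l = l') /\
    (forall (t : term Fsym) x (v : nat -> dom M),
        t <> Var x -> In x (vars_term t) -> eval M v t <> v x).

Definition normalised (r : rule) : Prop :=
  (exists xs, snd (head r) = map Var xs /\ NoDup xs) /\
  (forall b, In b (body r) ->
     Cp F (fst b) \/ exists xs, snd b = map Var xs /\ NoDup xs).

Definition wf_caba : Prop :=
  (forall p, Cp F p -> Lp F p) /\
  (forall p, Ap F p -> Lp F p /\ ~ Cp F p) /\
  (exists p, Ap F p) /\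
  Cp F (eqP F) /\
  (forall phi a, CT F phi -> In a (atoms_of phi) -> Cp F (fst a)) /\
  includes_CET /\
  (forall r, Rl F r ->
     Lp F (fst (head r)) /\ ~ Cp F (fst (head r)) /\ ~ Ap F (fst (head r)) /\
     (forall b, In b (body r) -> Lp F (fst b)) /\
     normalised r) /\
  (forall p, Ap F p -> Lp F (ctr F p) /\ ~ Cp F (ctr F p)).

(* each node is annotated with the rule of R used and the renaming giving the
   renamed-apart copy *)
Definition tnode := (rule * (nat -> nat))%type.

Definition tight_local (t : tree Fsym Psym tnode) : Prop :=
  match t with
  | TTrue => True
  | TLeaf a => Cp F (fst a) \/ Ap F (fst a)
  | TNode a (r, rho) kids =>
      Rl F r /\ (forall x y, rho x = rho y -> x = y) /\
      let rr := rename_rule rho r in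
      exists xs, snd (head rr) = map Var xs /\
        fst (head rr) = fst a /\ length xs = length (snd a) /\
        kids_match (map (asubst (combine xs (snd a))) (body rr)) kids
  end.

Definition renamed_apart (t : tree Fsym Psym tnode) (s : atom) : Prop :=
  let cps := map (fun n => rename_rule (snd n) (fst n)) (annots t) in
  ForallOrdPairs (fun r1 r2 => forall x, In x (vars_rule r1) -> ~ In x (vars_rule r2)) cps /\
  (forall r x, In r cps -> In x (vars_rule r) -> ~ In x (vars_atom s)).

Record carg : Type := mkCarg {
  ca_cs : list atom; ca_as : list atom; ca_rs : list rule; ca_claim : atom }.

Definition is_tight (t : tree Fsym Psym tnode) (al : carg) : Prop :=
  root t = Some (ca_claim al) /\
  Lp F (fst (ca_claim al)) /\ ~ Cp F (fst (ca_claim al)) /\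
  (forall s, In s (subtrees t) -> tight_local s) /\
  renamed_apart t (ca_claim al) /\
  (forall c, In c (ca_cs al) <-> In c (leaf_atoms t) /\ Cp F (fst c)) /\
  (forall a, In a (ca_as al) <-> In a (leaf_atoms t) /\ Ap F (fst a)) /\
  (forall r, In r (ca_rs al) <-> exists rho, In (r, rho) (annots t)) /\
  consistent (ca_cs al).

Definition tight_carg (al : carg) : Prop := exists t, is_tight t al.

Definition cinstance (al be : carg) : Prop :=
  exists (th : subst Fsym) (D : list atom),
    is_subst th /\ (forall d, In d D -> Cp F (fst d)) /\
    consistent (map (asubst th) (ca_cs al) ++ D) /\
    be = mkCarg (map (asubst th) (ca_cs al) ++ D) (map (asubst th) (ca_as al))
                (ca_rs al) (asubst th (ca_claim al)).

Definition CArg (be : carg) : Prop :=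
  exists al, tight_carg al /\ cinstance al be.

Definition ground_carg (be : carg) : Prop :=
  (forall c, In c (ca_cs be) -> ground_atom c) /\
  (forall a, In a (ca_as be) -> ground_atom a) /\
  ground_atom (ca_claim be).

Definition GrCInst_CArg (be : carg) : Prop :=
  exists al, CArg al /\ cinstance al be /\ ground_carg be.

Definition ground_rules (rg : rule) : Prop :=
  (exists r (sg : subst Fsym), Rl F r /\ is_subst sg /\ rg = rsubst sg r /\ ground_rule rg)
  \/ (exists c, Cp F (fst c) /\ ground_atom c /\ entails c /\ rg = mkRule c []).

Definition ground_local (t : tree Fsym Psym rule) : Prop :=
  match t with
  | TTrue => True
  | TLeaf a => Ap F (fst a) /\ ground_atom a
  | TNode a rg kids => ground_rules rg /\ head rg = a /\ kids_match (body rg) kids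
  end.

Record garg : Type := mkGarg { ga_as : list atom; ga_rs : list rule; ga_claim : atom }.

Definition Arg_c (ga : garg) : Prop :=
  exists t : tree Fsym Psym rule,
    root t = Some (ga_claim ga) /\
    (forall s, In s (subtrees t) -> ground_local s) /\
    (forall a, In a (ga_as ga) <-> In a (leaf_atoms t)) /\
    (forall r, In r (ga_rs ga) <-> In r (annots t)).

(* CT |= p(t) <-> p(t')  for ground atoms *)
Definition atom_equiv (a a' : atom) : Prop :=
  fst a = fst a' /\ length (snd a) = length (snd a') /\
  Forall2 entails_eq (snd a) (snd a').

Definition set_equiv (A A' : list atom) : Prop :=
  (forall a, In a A -> exists a', In a' A' /\ atom_equiv a a') /\
  (forall a', In a' A' -> exists a, In a A /\ atom_equiv a a').

Definition eq_mod_gc (be : carg) (ga : garg) : Prop :=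
  set_equiv (ca_as be) (ga_as ga) /\ atom_equiv (ca_claim be) (ga_claim ga).

End CABA.

(* Main.v *)
Require Import Defs.
From Stdlib Require Import List Arith Lia ClassicalEpsilon Cantor.
Import ListNotations.
Set Implicit Arguments.

Fixpoint term_ind2 {Fsym : Type} (P : term Fsym -> Prop) (HV : forall x, P (Var x))
  (HF : forall f l, Forall P l -> P (Fn f l)) (t : term Fsym) : P t :=
  match t with
  | Var x => HV x
  | Fn f l => HF f l ((fix go l : Forall P l := match l with
        | [] => Forall_nil _ | u :: l' => @Forall_cons _ P u l' (@term_ind2 Fsym P HV HF u) (go l') end) l)
  end.

Fixpoint tree_ind2 {Fsym Psym N : Type} (P : tree Fsym Psym N -> Prop) (HT : P TTrue)
  (HL : forall a, P (TLeaf a))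
  (HN : forall a n kids, Forall P kids -> P (TNode a n kids)) (t : tree Fsym Psym N) : P t :=
  match t with
  | TTrue => HT
  | TLeaf a => HL a
  | TNode a n kids => HN a n kids ((fix go l : Forall P l := match l with
        | [] => Forall_nil _ | u :: l' => @Forall_cons _ P u l' (@tree_ind2 Fsym Psym N P HT HL HN u) (go l') end) kids)
  end.

Lemma tsubstf_comp {Fsym} (s1 s2 : nat -> term Fsym) t :
  tsubstf s1 (tsubstf s2 t) = tsubstf (fun x => tsubstf s1 (s2 x)) t.
Proof.
  induction t using term_ind2; simpl; auto.
  f_equal. rewrite map_map. apply map_ext_Forall. exact H.
Qed.

Lemma tsubstf_ext {Fsym} (s1 s2 : nat -> term Fsym) t :
  (forall x, In x (vars_term t) -> s1 x = s2 x) -> tsubstf s1 t = tsubstf s2 t.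
Proof.
  induction t using term_ind2; simpl; intros Hx.
  - apply Hx; auto.
  - f_equal. apply map_ext_in. intros u Hu. rewrite Forall_forall in H.
    apply H; auto. intros x Hx'. apply Hx. apply in_flat_map. eauto.
Qed.

Lemma tsubstf_Var {Fsym} (t : term Fsym) : tsubstf (@Var _) t = t.
Proof.
  induction t using term_ind2; simpl; auto.
  f_equal. rewrite <- (map_id l) at 2. apply map_ext_Forall. exact H.
Qed.

Lemma tsubstf_ground {Fsym} (s : nat -> term Fsym) t :
  vars_term t = [] -> tsubstf s t = t.
Proof.
  intros H. rewrite <- (tsubstf_Var t) at 2. apply tsubstf_ext. rewrite H. simpl. tauto.
Qed.

Lemma vars_tsubstf {Fsym} (s : nat -> term Fsym) t z :
  In z (vars_term (tsubstf s t)) -> exists x, In x (vars_term t) /\ In z (vars_term (s x)).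
Proof.
  induction t using term_ind2; simpl; intros Hz.
  - eauto.
  - apply in_flat_map in Hz. destruct Hz as [u [Hu Hz]].
    apply in_map_iff in Hu. destruct Hu as [w [<- Hw]].
    rewrite Forall_forall in H. destruct (H w Hw Hz) as [x [Hx1 Hx2]].
    exists x. split; auto. apply in_flat_map. eauto.
Qed.

Lemma nil_iff {A} (l : list A) : l = [] <-> forall z, ~ In z l.
Proof.
  split. intros ->; simpl; auto. destruct l; auto. intros H; exfalso; apply (H a); simpl; auto.
Qed.

Lemma tsubstf_ground_of {Fsym} (s : nat -> term Fsym) t :
  (forall x, In x (vars_term t) -> vars_term (s x) = []) -> vars_term (tsubstf s t) = [].
Proof.
  intros H. apply nil_iff. intros z Hz. apply vars_tsubstf in Hz.
  destruct Hz as [x [Hx Hz]]. rewrite (H x Hx) in Hz. exact Hz.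
Qed.

Lemma eval_tsubstf {Fsym Psym} (M : structure Fsym Psym) v (s : nat -> term Fsym) t :
  eval M v (tsubstf s t) = eval M (fun x => eval M v (s x)) t.
Proof.
  induction t using term_ind2; simpl; auto.
  f_equal. rewrite map_map. apply map_ext_Forall. exact H.
Qed.

Lemma eval_ground {Fsym Psym} (M : structure Fsym Psym) v v' (t : term Fsym) :
  vars_term t = [] -> eval M v t = eval M v' t.
Proof.
  induction t using term_ind2; simpl; intros Hg.
  - discriminate.
  - f_equal. apply map_ext_in. intros u Hu. rewrite Forall_forall in H.
    apply H; auto. apply nil_iff. intros z Hz. rewrite nil_iff in Hg. apply (Hg z). apply in_flat_map. eauto.
Qed.

Lemma asubstf_comp {Fsym Psym} (s1 s2 : nat -> term Fsym) (a : atom Fsym Psym) :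
  asubstf s1 (asubstf s2 a) = asubstf (fun x => tsubstf s1 (s2 x)) a.
Proof.
  unfold asubstf; simpl. f_equal. rewrite map_map. apply map_ext. intros; apply tsubstf_comp.
Qed.

Lemma asubstf_ext {Fsym Psym} (s1 s2 : nat -> term Fsym) (a : atom Fsym Psym) :
  (forall x, In x (vars_atom a) -> s1 x = s2 x) -> asubstf s1 a = asubstf s2 a.
Proof.
  intros H. unfold asubstf. f_equal. apply map_ext_in. intros u Hu. apply tsubstf_ext.
  intros x Hx. apply H. unfold vars_atom. apply in_flat_map. eauto.
Qed.

Lemma asubstf_ground {Fsym Psym} (s : nat -> term Fsym) (a : atom Fsym Psym) :
  ground_atom a -> asubstf s a = a.
Proof.
  intros H. destruct a as [p l]. unfold asubstf; simpl. f_equal.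
  rewrite <- (map_id l) at 2. apply map_ext_in. intros u Hu. apply tsubstf_ground.
  apply nil_iff. intros z Hz. unfold ground_atom, vars_atom in H. rewrite nil_iff in H.
  apply (H z). apply in_flat_map. eauto.
Qed.

Lemma asubstf_Var {Fsym Psym} (a : atom Fsym Psym) : asubstf (@Var _) a = a.
Proof.
  destruct a as [p l]. unfold asubstf; simpl. f_equal.
  rewrite <- (map_id l) at 2. apply map_ext. apply tsubstf_Var.
Qed.

Lemma asubstf_ground_of {Fsym Psym} (s : nat -> term Fsym) (a : atom Fsym Psym) :
  (forall x, In x (vars_atom a) -> vars_term (s x) = []) -> ground_atom (asubstf s a).
Proof.
  intros H. unfold ground_atom, vars_atom, asubstf; simpl. apply nil_iff. intros z Hz.
  apply in_flat_map in Hz. destruct Hz as [u [Hu Hz]]. apply in_map_iff in Hu.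
  destruct Hu as [w [<- Hw]]. rewrite tsubstf_ground_of in Hz. exact Hz.
  intros x Hx. apply H. unfold vars_atom. apply in_flat_map. eauto.
Qed.

Lemma vars_asubstf {Fsym Psym} (s : nat -> term Fsym) (a : atom Fsym Psym) z :
  In z (vars_atom (asubstf s a)) -> exists x, In x (vars_atom a) /\ In z (vars_term (s x)).
Proof.
  unfold vars_atom, asubstf; simpl. intros Hz.
  apply in_flat_map in Hz. destruct Hz as [u [Hu Hz]]. apply in_map_iff in Hu.
  destruct Hu as [w [<- Hw]]. apply vars_tsubstf in Hz. destruct Hz as [x [Hx Hz]].
  exists x. split; auto. apply in_flat_map. eauto.
Qed.

Lemma sat_asubstf {Fsym Psym} (M : structure Fsym Psym) v (s : nat -> term Fsym) (a : atom Fsym Psym) :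
  sat_atom M v (asubstf s a) <-> sat_atom M (fun x => eval M v (s x)) a.
Proof.
  unfold sat_atom, asubstf; simpl. rewrite map_map.
  erewrite map_ext. reflexivity. intros; apply eval_tsubstf.
Qed.

Lemma sat_ground {Fsym Psym} (M : structure Fsym Psym) v v' (a : atom Fsym Psym) :
  ground_atom a -> sat_atom M v a -> sat_atom M v' a.
Proof.
  unfold sat_atom. intros Hg H. erewrite map_ext_in. exact H.
  intros u Hu. apply eval_ground. apply nil_iff. intros z Hz.
  unfold ground_atom, vars_atom in Hg. rewrite nil_iff in Hg. apply (Hg z). apply in_flat_map. eauto.
Qed.

Lemma lookup_in {Fsym} (th : subst Fsym) x t :
  NoDup (map fst th) -> In (x, t) th -> lookup th x = t.
Proof.
  induction th as [|[y u] th IH]; simpl; intros Hnd Hin; [contradiction|].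
  inversion Hnd; subst. destruct Hin as [Heq|Hin].
  - inversion Heq; subst. rewrite Nat.eqb_refl. auto.
  - destruct (Nat.eqb_spec x y); subst.
    + exfalso. apply H1. apply in_map_iff. exists (y, t); auto.
    + auto.
Qed.

Lemma lookup_notin {Fsym} (th : subst Fsym) x :
  ~ In x (map fst th) -> lookup th x = Var x.
Proof.
  induction th as [|[y u] th IH]; simpl; intros H; auto.
  destruct (Nat.eqb_spec x y); subst. exfalso; auto. auto.
Qed.

Lemma lookup_combine {Fsym} (xs : list nat) (l : list (term Fsym)) :
  NoDup xs -> length xs = length l -> map (lookup (combine xs l)) xs = l.
Proof.
  revert l; induction xs as [|x xs IH]; intros [|t l] Hnd Hl; simpl in *; try discriminate; auto.
  inversion Hnd; subst. rewrite Nat.eqb_refl. f_equal.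
  transitivity (map (lookup (combine xs l)) xs); [|apply IH; auto]. apply map_ext_in. intros y Hy.
  destruct (Nat.eqb_spec y x); subst; auto. contradiction.
Qed.

Lemma lookup_combine_notin {Fsym} (xs : list nat) (l : list (term Fsym)) x :
  ~ In x xs -> lookup (combine xs l) x = Var x.
Proof.
  revert l; induction xs as [|y xs IH]; intros [|t l] H; simpl; auto.
  destruct (Nat.eqb_spec x y); subst. exfalso; simpl in H; auto. apply IH. simpl in H; auto.
Qed.

Definition mk_subst {Fsym} (V : list nat) (f : nat -> term Fsym) : subst Fsym :=
  map (fun x => (x, f x)) (nodup Nat.eq_dec V).

Lemma mk_subst_is {Fsym} V (f : nat -> term Fsym) : is_subst (mk_subst V f).
Proof.
  unfold is_subst, mk_subst. rewrite map_map. simpl. rewrite map_id. apply NoDup_nodup.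
Qed.

Lemma mk_subst_lookup {Fsym} V (f : nat -> term Fsym) x :
  In x V -> lookup (mk_subst V f) x = f x.
Proof.
  intros H. apply lookup_in. apply mk_subst_is. unfold mk_subst. apply in_map_iff.
  exists x. split; auto. apply nodup_In. auto.
Qed.

Lemma flat_map_flat_map {A B C} (f : B -> list C) (g : A -> list B) l :
  flat_map f (flat_map g l) = flat_map (fun x => flat_map f (g x)) l.
Proof. induction l; simpl; auto. rewrite flat_map_app. f_equal; auto. Qed.

Lemma leaf_atoms_node {Fsym Psym N} a (n : N) (kids : list (tree Fsym Psym N)) :
  leaf_atoms (TNode a n kids) = flat_map (@leaf_atoms _ _ _) kids.
Proof. unfold leaf_atoms. simpl. rewrite flat_map_flat_map. auto. Qed.

Lemma annots_node {Fsym Psym N} a (n : N) (kids : list (tree Fsym Psym N)) :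
  annots (TNode a n kids) = n :: flat_map (@annots _ _ _) kids.
Proof. unfold annots. simpl. rewrite flat_map_flat_map. auto. Qed.

Lemma subtrees_node {Fsym Psym N} a (n : N) (kids : list (tree Fsym Psym N)) s :
  In s (subtrees (TNode a n kids)) <-> s = TNode a n kids \/ exists k, In k kids /\ In s (subtrees k).
Proof.
  simpl. rewrite in_flat_map. split; intros [H|H]; auto.
Qed.

Lemma all_sub_node {Fsym Psym N} (P : tree Fsym Psym N -> Prop) a n kids :
  (forall s, In s (subtrees (TNode a n kids)) -> P s) <->
  P (TNode a n kids) /\ forall k, In k kids -> forall s, In s (subtrees k) -> P s.
Proof.
  split.
  - intros H. split. apply H. simpl; auto. intros k Hk s Hs. apply H. apply subtrees_node. eauto.
  - intros [H1 H2] s Hs. apply subtrees_node in Hs. destruct Hs as [->|[k [Hk Hs]]]; eauto.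
Qed.

Lemma sub_self {Fsym Psym N} (t : tree Fsym Psym N) : In t (subtrees t).
Proof. destruct t; simpl; auto. Qed.

Lemma atom_equiv_refl {Fsym Psym} (F : caba Fsym Psym) (a : atom Fsym Psym) : atom_equiv F a a.
Proof.
  unfold atom_equiv. split; auto. split; auto. induction (snd a); constructor; auto.
  unfold entails_eq, entails. intros M [_ [HM _]] v. unfold sat_atom. simpl. apply HM. auto.
Qed.

Definition xs_of {Fsym Psym} (h : atom Fsym Psym) : list nat :=
  map (fun t => match t with Var x => x | _ => 0 end) (snd h).

Lemma xs_of_eq {Fsym Psym} (h : atom Fsym Psym) xs : snd h = map Var xs -> xs = xs_of h.
Proof. intros H. unfold xs_of. rewrite H, map_map. simpl. rewrite map_id. auto. Qed.

Lemma in_vars_rule_head {Fsym Psym} (r : rule Fsym Psym) y :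
  In y (vars_atom (Defs.head r)) -> In y (vars_rule r).
Proof. intros; unfold vars_rule; apply in_or_app; auto. Qed.

Lemma in_vars_rule_body {Fsym Psym} (r : rule Fsym Psym) b y :
  In b (body r) -> In y (vars_atom b) -> In y (vars_rule r).
Proof. intros; unfold vars_rule; apply in_or_app; right; apply in_flat_map; eauto. Qed.

Lemma rename_head {Fsym Psym} (r : rule Fsym Psym) rho ys :
  snd (Defs.head r) = map Var ys -> snd (Defs.head (rename_rule rho r)) = map Var (map rho ys).
Proof.
  intros H. unfold rename_rule, rsubstf, asubstf; simpl. rewrite H, !map_map. auto.
Qed.

Lemma NoDup_map_inj {A B} (f : A -> B) l :
  (forall x y, f x = f y -> x = y) -> NoDup l -> NoDup (map f l).
Proof.
  intros Hf Hnd. induction Hnd; simpl; constructor; auto.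
  intros Hin. apply in_map_iff in Hin. destruct Hin as [z [Hz Hz']]. apply Hf in Hz. subst. auto.
Qed.

Definition theta_of {Fsym Psym} (a : atom Fsym Psym) (rr : rule Fsym Psym) : subst Fsym :=
  combine (xs_of (Defs.head rr)) (snd a).

Lemma node_inst {Fsym Psym} (Gf : nat -> term Fsym) (r : rule Fsym Psym) rho (a : atom Fsym Psym)
  (sg : subst Fsym) :
  (exists ys, snd (Defs.head r) = map Var ys /\ NoDup ys) ->
  (forall x y, rho x = rho y -> x = y) ->
  fst (Defs.head r) = fst a ->
  length (xs_of (Defs.head (rename_rule rho r))) = length (snd a) ->
  (forall y, In y (vars_rule r) ->
     lookup sg y = tsubstf Gf (lookup (theta_of a (rename_rule rho r)) (rho y))) ->
  Defs.head (rsubst sg r) = asubstf Gf a /\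
  body (rsubst sg r) = map (asubstf Gf) (map (asubst (theta_of a (rename_rule rho r)))
                                            (body (rename_rule rho r))).
Proof.
  intros [ys [Hys Hnd]] Hinj Hfst Hlen Hsg.
  set (rr := rename_rule rho r) in *. set (th := theta_of a rr) in *.
  assert (Hxs : xs_of (Defs.head rr) = map rho ys).
  { symmetry. apply xs_of_eq. apply rename_head. auto. }
  assert (Hth : th = combine (map rho ys) (snd a)) by (unfold th, theta_of; rewrite Hxs; auto).
  rewrite Hxs in Hlen. clearbody th.
  split.
  - unfold rsubst, rsubstf, asubstf; simpl. destruct a as [p l]. simpl in *. f_equal; auto.
    rewrite Hys, map_map. simpl.
    transitivity (map (tsubstf Gf) (map (lookup th) (map rho ys))).
    + rewrite !map_map. apply map_ext_in. intros y Hy. apply Hsg. apply in_vars_rule_head.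
      unfold vars_atom. rewrite Hys. apply in_flat_map. exists (Var y). split; simpl; auto.
      apply in_map; auto.
    + f_equal. rewrite Hth. apply lookup_combine; auto.
      apply NoDup_map_inj; auto.
  - unfold rsubst, rsubstf; simpl. unfold rr, rename_rule, rsubstf; simpl. rewrite !map_map.
    apply map_ext_in. intros b Hb. unfold asubst. rewrite !asubstf_comp.
    apply asubstf_ext. intros y Hy. simpl. rewrite Hsg. auto. eapply in_vars_rule_body; eauto.
Qed.

Lemma ground_rule_of {Fsym Psym} (r : rule Fsym Psym) (sg : subst Fsym) :
  (forall y, In y (vars_rule r) -> vars_term (lookup sg y) = []) -> ground_rule (rsubst sg r).
Proof.
  intros H. unfold ground_rule, vars_rule, rsubst, rsubstf; simpl.
  rewrite asubstf_ground_of. simpl. apply nil_iff. intros z Hz.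
  apply in_flat_map in Hz. destruct Hz as [b' [Hb' Hz]]. apply in_map_iff in Hb'.
  destruct Hb' as [b [<- Hb]]. rewrite asubstf_ground_of in Hz. exact Hz.
  intros x Hx. apply H. eapply in_vars_rule_body; eauto.
  intros x Hx. apply H. apply in_vars_rule_head; auto.
Qed.

Definition sg_of {Fsym Psym} (Gf : nat -> term Fsym) (a : atom Fsym Psym) (r : rule Fsym Psym) rho :=
  mk_subst (vars_rule r) (fun y => tsubstf Gf (lookup (theta_of a (rename_rule rho r)) (rho y))).

Fixpoint gmap {Fsym Psym} (F : caba Fsym Psym) (Gf : nat -> term Fsym)
  (t : tree Fsym Psym (tnode Fsym Psym)) : tree Fsym Psym (rule Fsym Psym) :=
  match t with
  | TTrue => TTrue
  | TLeaf a => if excluded_middle_informative (Cp F (fst a))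
               then TNode (asubstf Gf a) (mkRule (asubstf Gf a) []) [TTrue]
               else TLeaf (asubstf Gf a)
  | TNode a (r, rho) kids =>
      TNode (asubstf Gf a) (rsubst (sg_of Gf a r rho) r) (map (gmap F Gf) kids)
  end.

Lemma leaf_atoms_TTrue {Fsym Psym N} : leaf_atoms (@TTrue Fsym Psym N) = [].
Proof. reflexivity. Qed.
Lemma leaf_atoms_TLeaf {Fsym Psym N} a : leaf_atoms (@TLeaf Fsym Psym N a) = [a].
Proof. reflexivity. Qed.

Lemma gmap_ok {Fsym Psym} (F : caba Fsym Psym) (Gf : nat -> term Fsym) :
  wf_caba F -> (forall x, vars_term (Gf x) = []) ->
  forall t, (forall s, In s (subtrees t) -> tight_local F s) ->
  (forall c, In c (leaf_atoms t) -> Cp F (fst c) -> entails F (asubstf Gf c)) ->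
  (forall s, In s (subtrees (gmap F Gf t)) -> ground_local F s) /\
  root (gmap F Gf t) = option_map (asubstf Gf) (root t) /\
  (forall a, In a (leaf_atoms (gmap F Gf t)) <->
     exists b, In b (leaf_atoms t) /\ Ap F (fst b) /\ a = asubstf Gf b).
Proof.
  intros Hwf HGf.
  assert (Hgr : forall a : atom Fsym Psym, ground_atom (asubstf Gf a)).
  { intros a. apply asubstf_ground_of. auto. }
  destruct Hwf as [_ [HAp [_ [_ [_ [_ [HRl _]]]]]]].
  induction t as [| a | a [r rho] kids IH] using tree_ind2; intros Ht Hc.
  - simpl. split; [|split]. intros s [<-|[]]; simpl; auto. auto.
    intros a. cbn. split; [tauto|]. intros [b [[] _]].
  - assert (Hl : tight_local F (TLeaf a)) by (apply Ht; simpl; auto). simpl in Hl.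
    simpl. destruct (excluded_middle_informative (Cp F (fst a))) as [HC|HC].
    + split; [|split].
      * intros s Hs. simpl in Hs. destruct Hs as [<-|[<-|[]]]; simpl; auto.
        split; [|split; auto]. right. exists (asubstf Gf a). repeat split; auto.
        apply Hc; simpl; auto.
      * auto.
      * intros x. rewrite leaf_atoms_node. simpl. split; [tauto|].
        intros [b [[<-|[]] [Hb _]]]. exfalso. apply (HAp _ Hb). auto.
    + assert (Hap : Ap F (fst a)) by tauto.
      split; [|split].
      * intros s [<-|[]]. simpl. auto.
      * auto.
      * intros x. rewrite !leaf_atoms_TLeaf. simpl. split.
        -- intros [<-|[]]. eauto.
        -- intros [b [[<-|[]] [_ ->]]]. auto.
  - rewrite all_sub_node in Ht. destruct Ht as [Hloc Hkids].
    simpl in Hloc. destruct Hloc as [HR [Hinj [xs [Hxs [Hfst [Hlen Hkm]]]]]].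
    pose proof (xs_of_eq (Defs.head (rename_rule rho r)) xs Hxs) as Exs. subst xs.
    destruct (HRl r HR) as [_ [_ [_ [_ [[ys [Hys Hnd]] _]]]]].
    set (sg := sg_of Gf a r rho).
    assert (Hsg : forall y, In y (vars_rule r) ->
       lookup sg y = tsubstf Gf (lookup (theta_of a (rename_rule rho r)) (rho y))).
    { intros y Hy. unfold sg, sg_of. rewrite mk_subst_lookup; auto. }
    assert (Hfst' : fst (Defs.head r) = fst a).
    { rewrite <- Hfst. unfold rename_rule, rsubstf, asubstf. simpl. auto. }
    destruct (node_inst Gf r rho a sg (ex_intro _ ys (conj Hys Hnd)) Hinj Hfst' Hlen Hsg)
      as [Hhd Hbd].
    rewrite Forall_forall in IH.
    assert (IHk : forall k, In k kids ->
       (forall s, In s (subtrees (gmap F Gf k)) -> ground_local F s) /\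
       root (gmap F Gf k) = option_map (asubstf Gf) (root k) /\
       (forall a0, In a0 (leaf_atoms (gmap F Gf k)) <->
          exists b, In b (leaf_atoms k) /\ Ap F (fst b) /\ a0 = asubstf Gf b)).
    { intros k Hk. apply IH; [exact Hk | apply Hkids; exact Hk | ].
      intros c Hck Hcp. apply Hc; auto. rewrite leaf_atoms_node.
      apply in_flat_map. eauto. }
    simpl gmap. fold sg. split; [|split].
    + apply all_sub_node. split.
      * simpl. split; [|split].
        -- left. exists r, sg. repeat split; auto. unfold sg, sg_of. apply mk_subst_is.
           apply ground_rule_of. intros y Hy. rewrite Hsg by auto.
           apply tsubstf_ground_of. auto.
        -- auto.
        -- change (kids_match (body (rsubst sg r)) (map (gmap F Gf) kids)).
           change (kids_match (map (asubst (theta_of a (rename_rule rho r)))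
                                   (body (rename_rule rho r))) kids) in Hkm.
           rewrite Hbd. revert Hkm.
           generalize (map (asubst (theta_of a (rename_rule rho r))) (body (rename_rule rho r))).
           intros bd Hkm. destruct bd as [|b0 bd'].
           ++ simpl in *. subst kids. simpl. auto.
           ++ simpl in Hkm |- *. rewrite map_map.
              transitivity (map (option_map (asubstf Gf)) (map (@root _ _ _) kids)).
              ** rewrite map_map. apply map_ext_in. intros k Hk. apply IHk; auto.
              ** rewrite Hkm. simpl. f_equal. rewrite !map_map. reflexivity.
      * intros k' Hk'. apply in_map_iff in Hk'. destruct Hk' as [k [<- Hk]]. apply IHk; auto.
    + simpl. auto.
    + intros x. rewrite !leaf_atoms_node. rewrite in_flat_map. split.
      * intros [k' [Hk' Hx]]. apply in_map_iff in Hk'. destruct Hk' as [k [<- Hk]].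
        apply (IHk k Hk) in Hx. destruct Hx as [b [Hb1 Hb2]]. exists b. split; auto.
        apply in_flat_map. eauto.
      * intros [b [Hb1 Hb2]]. apply in_flat_map in Hb1. destruct Hb1 as [k [Hk Hb1]].
        exists (gmap F Gf k). split. apply in_map; auto. apply (IHk k Hk). eauto.
Qed.

Lemma G_eq {Fsym Psym} (t0 : term Fsym) (th1 th2 : subst Fsym) (c : atom Fsym Psym) :
  ground_atom (asubst th2 (asubst th1 c)) ->
  asubstf (fun x => tsubstf (fun _ => t0) (tsubst th2 (lookup th1 x))) c =
  asubst th2 (asubst th1 c).
Proof.
  intros Hg. rewrite <- (asubstf_ground (fun _ => t0) Hg).
  unfold asubst. rewrite !asubstf_comp. apply asubstf_ext. intros x _. unfold tsubst. rewrite tsubstf_comp. reflexivity.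
Qed.

Lemma part1 {Fsym Psym} (F : caba Fsym Psym) :
  wf_caba F -> (exists t : term Fsym, ground_term t) ->
  forall be, GrCInst_CArg F be -> exists ga, Arg_c F ga /\ eq_mod_gc F be ga.
Proof.
  intros Hwf [t0 Ht0] be Hbe.
  destruct Hbe as [al [[al0 [[T HT] Hci1]] [Hci2 Hgb]]].
  destruct Hci1 as [th1 [D1 [_ [_ [_ Eal]]]]].
  destruct Hci2 as [th2 [D2 [_ [_ [Hcons Ebe]]]]].
  destruct HT as [Hroot [_ [_ [Htl [_ [Hcs [Has [_ _]]]]]]]].
  set (Gf := fun x => tsubstf (fun _ => t0) (tsubst th2 (lookup th1 x))).
  assert (HGf : forall x, vars_term (Gf x) = []).
  { intros x. unfold Gf. apply tsubstf_ground_of. auto. }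
  destruct Hgb as [Hgcs [Hgas Hgcl]].
  subst al. subst be. simpl in *.
  assert (Hent : forall c, In c (leaf_atoms T) -> Cp F (fst c) -> entails F (asubstf Gf c)).
  { intros c Hc Hcp.
    assert (Hin : In (asubst th2 (asubst th1 c))
                  (map (asubst th2) (map (asubst th1) (ca_cs al0) ++ D1) ++ D2)).
    { apply in_or_app. left. apply in_map. apply in_or_app. left. apply in_map.
      apply Hcs. auto. }
    pose proof (Hgcs _ Hin) as Hg. unfold Gf. rewrite G_eq by auto.
    intros M HM v. destruct (Hcons M HM) as [v' Hv']. apply sat_ground with v'; auto. }
  destruct (gmap_ok Hwf HGf T Htl Hent) as [Hgl [Hgroot Hgleaf]].
  exists (mkGarg (leaf_atoms (gmap F Gf T)) (annots (gmap F Gf T)) (asubstf Gf (ca_claim al0))).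
  split.
  - exists (gmap F Gf T). simpl. split; [|split; [|split]]; try tauto.
    rewrite Hgroot, Hroot. auto.
  - unfold eq_mod_gc. simpl. split.
    + split.
      * intros a Ha. apply in_map_iff in Ha. destruct Ha as [a1 [<- Ha1]].
        apply in_map_iff in Ha1. destruct Ha1 as [b [<- Hb]].
        exists (asubstf Gf b). split.
        -- apply Hgleaf. apply Has in Hb. destruct Hb. eauto.
        -- unfold Gf. rewrite G_eq. apply atom_equiv_refl.
           apply Hgas. apply in_map. apply in_map. auto.
      * intros a' Ha'. apply Hgleaf in Ha'. destruct Ha' as [b [Hb [Hap ->]]].
        exists (asubst th2 (asubst th1 b)). split.
        -- apply in_map. apply in_map. apply Has. auto.
        -- unfold Gf. rewrite G_eq. apply atom_equiv_refl.
           apply Hgas. apply in_map. apply in_map. apply Has. auto.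
    + unfold Gf. rewrite G_eq by auto. apply atom_equiv_refl.
Qed.

Fixpoint encp (p : list nat) : nat :=
  match p with [] => 0 | i :: p' => S (Cantor.to_nat (i, encp p')) end.

Lemma to_nat_inj a b : Cantor.to_nat a = Cantor.to_nat b -> a = b.
Proof. intros H. rewrite <- (Cantor.cancel_of_to a), <- (Cantor.cancel_of_to b), H. auto. Qed.

Lemma encp_inj p q : encp p = encp q -> p = q.
Proof.
  revert q; induction p as [|i p IH]; intros [|j q]; cbn [encp]; intros H; try discriminate; auto.
  apply Nat.succ_inj in H. apply to_nat_inj in H. injection H as -> H. f_equal; auto.
Qed.

Definition rhoP (p : list nat) (y : nat) : nat := Cantor.to_nat (encp p, y).

Lemma rhoP_inj p q y z : rhoP p y = rhoP q z -> p = q /\ y = z.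
Proof.
  unfold rhoP. intros H. apply to_nat_inj in H. injection H as H ->. split; auto.
  apply encp_inj; auto.
Qed.

Fixpoint mapi2 {A B C} (f : nat -> A -> B -> C) (da : A) (i : nat) (la : list A) (lb : list B) : list C :=
  match lb with [] => [] | b :: lb' => f i (hd da la) b :: mapi2 f da (S i) (tl la) lb' end.

Definition rs_spec {Fsym Psym} (F : caba Fsym Psym) (rg : rule Fsym Psym)
  (rs : rule Fsym Psym * subst Fsym) : Prop :=
  Rl F (fst rs) /\ is_subst (snd rs) /\ rg = rsubst (snd rs) (fst rs) /\ ground_rule rg.

Definition choose {Fsym Psym} (F : caba Fsym Psym) (p0 : Psym) (rg : rule Fsym Psym) :
  rule Fsym Psym * subst Fsym :=
  epsilon (inhabits (mkRule (p0, []) [], [])) (rs_spec F rg).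

Lemma choose_spec {Fsym Psym} (F : caba Fsym Psym) p0 rg :
  (exists rs, rs_spec F rg rs) -> rs_spec F rg (choose F p0 rg).
Proof. intros H. unfold choose. apply epsilon_spec. auto. Qed.

Fixpoint build {Fsym Psym} (F : caba Fsym Psym) (p0 : Psym) (p : list nat)
  (lbl : atom Fsym Psym) (g : tree Fsym Psym (rule Fsym Psym)) {struct g} : tree Fsym Psym (tnode Fsym Psym) :=
  match g with
  | TTrue => TTrue
  | TLeaf _ => TLeaf lbl
  | TNode a rg kids =>
      if excluded_middle_informative (Cp F (fst a)) then TLeaf lbl else
      let r := fst (choose F p0 rg) in
      let rr := rename_rule (rhoP p) r in
      TNode lbl (r, rhoP p)
        (mapi2 (fun i l k => build F p0 (i :: p) l k) lbl 0
           (map (asubst (theta_of lbl rr)) (body rr)) kids)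
  end.

Fixpoint nodes {Fsym Psym} (F : caba Fsym Psym) (p0 : Psym) (p : list nat)
  (g : tree Fsym Psym (rule Fsym Psym)) {struct g} : list (list nat * (rule Fsym Psym * subst Fsym)) :=
  match g with
  | TNode a rg kids =>
      if excluded_middle_informative (Cp F (fst a)) then [] else
      (p, choose F p0 rg) :: concat (mapi2 (fun i (_ : unit) k => nodes F p0 (i :: p) k) tt 0 [] kids)
  | _ => []
  end.

Lemma annots_mapi2 {Fsym Psym} (F : caba Fsym Psym) p0 p lbl kids :
  Forall (fun k => forall p lbl, annots (build F p0 p lbl k) =
                    map (fun n => (fst (snd n), rhoP (fst n))) (nodes F p0 p k)) kids ->
  forall bd j,
  flat_map (@annots _ _ _) (mapi2 (fun i l k => build F p0 (i :: p) l k) lbl j bd kids) =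
  map (fun n => (fst (snd n), rhoP (fst n)))
      (concat (mapi2 (fun i (_ : unit) k => nodes F p0 (i :: p) k) tt j [] kids)).
Proof.
  induction 1 as [|k ks Hk Hks IHks]; intros bd j; simpl; auto.
  rewrite map_app. f_equal; auto.
Qed.

Lemma annots_build {Fsym Psym} (F : caba Fsym Psym) p0 g : forall p lbl,
  annots (build F p0 p lbl g) =
  map (fun n => (fst (snd n), rhoP (fst n))) (nodes F p0 p g).
Proof.
  induction g as [| a | a rg kids IH] using tree_ind2; intros p lbl; try reflexivity.
  simpl. destruct (excluded_middle_informative (Cp F (fst a))); [reflexivity|].
  rewrite annots_node. simpl. f_equal. apply annots_mapi2. auto.
Qed.

Lemma NoDup_app' {A} (l1 l2 : list A) :
  NoDup l1 -> NoDup l2 -> (forall x, In x l1 -> ~ In x l2) -> NoDup (l1 ++ l2).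
Proof.
  induction l1 as [|x l1 IHl1]; simpl; intros H1 H2 H; auto. inversion H1; subst. constructor.
  - rewrite in_app_iff. intros [?|?]; [auto|]. apply (H x); auto.
  - apply IHl1; auto.
Qed.

Lemma nodes_paths {Fsym Psym} (F : caba Fsym Psym) p0 g : forall p,
  NoDup (map fst (nodes F p0 p g)) /\
  (forall q, In q (map fst (nodes F p0 p g)) -> exists q', q = q' ++ p).
Proof.
  induction g as [| a | a rg kids IH] using tree_ind2; intros p; try (simpl; split; [constructor | tauto]).
  simpl. destruct (excluded_middle_informative (Cp F (fst a))); [simpl; split; [constructor|tauto]|].
  assert (K : forall j, NoDup (map fst (concat (mapi2 (fun i (_ : unit) k => nodes F p0 (i :: p) k) tt j [] kids))) /\
     forall q, In q (map fst (concat (mapi2 (fun i (_ : unit) k => nodes F p0 (i :: p) k) tt j [] kids))) ->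
       exists q' i, j <= i /\ q = q' ++ i :: p).
  { induction IH as [|k ks Hk Hks IHks]; intros j; simpl.
    - split; [constructor|tauto].
    - destruct (Hk (j :: p)) as [Hk1 Hk2]. destruct (IHks (S j)) as [Hr1 Hr2].
      rewrite map_app. split.
      + apply NoDup_app'; auto. intros q Hq Hq'.
        destruct (Hk2 q Hq) as [q1 ->]. destruct (Hr2 _ Hq') as [q2 [i [Hi E]]].
        replace (q1 ++ j :: p) with ((q1 ++ [j]) ++ p) in E
          by (rewrite <- app_assoc; auto).
        replace (q2 ++ i :: p) with ((q2 ++ [i]) ++ p) in E by (rewrite <- app_assoc; auto).
        apply app_inv_tail in E. apply app_inj_tail in E. destruct E as [_ ->]. lia.
      + intros q Hq. apply in_app_iff in Hq. destruct Hq as [Hq|Hq].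
        * destruct (Hk2 q Hq) as [q1 ->]. exists q1, j. split; auto.
        * destruct (Hr2 q Hq) as [q2 [i [Hi ->]]]. exists q2, i. split; auto. lia. }
  destruct (K 0) as [K1 K2]. simpl. split.
  - constructor; auto. intros Hp. destruct (K2 p Hp) as [q' [i [_ E]]].
    apply (f_equal (@length nat)) in E. rewrite length_app in E. simpl in E. lia.
  - intros q [<-|Hq]. exists []; auto. destruct (K2 q Hq) as [q' [i [_ ->]]].
    exists (q' ++ [i]). rewrite <- app_assoc. auto.
Qed.

Lemma map_eq_in {A B} (f g : A -> B) l x : map f l = map g l -> In x l -> f x = g x.
Proof.
  induction l; simpl; intros H Hx; [contradiction|]. destruct Hx as [->|Hx]; injection H; auto.
Qed.

Lemma label_inst {Fsym Psym} (th sg : subst Fsym) (r : rule Fsym Psym) rho (lbl : atom Fsym Psym) ys :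
  snd (Defs.head r) = map Var ys -> NoDup ys -> (forall x y, rho x = rho y -> x = y) ->
  length ys = length (snd lbl) ->
  map (tsubst th) (snd lbl) = map (lookup sg) ys ->
  (forall y, In y (vars_rule r) -> ~ In y ys -> lookup th (rho y) = lookup sg y) ->
  forall b, In b (body r) ->
  asubst th (asubst (theta_of lbl (rename_rule rho r)) (asubstf (fun x => Var (rho x)) b)) = asubst sg b.
Proof.
  intros Hys Hnd Hinj Hlen Hmap Hout b Hb.
  assert (Hxs : xs_of (Defs.head (rename_rule rho r)) = map rho ys).
  { symmetry. apply xs_of_eq. apply rename_head. auto. }
  unfold theta_of. rewrite Hxs.
  unfold asubst. rewrite !asubstf_comp. apply asubstf_ext. intros y Hy. simpl.
  destruct (in_dec Nat.eq_dec y ys) as [Hin|Hnin].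
  - assert (E : map (fun y => tsubst th (lookup (combine (map rho ys) (snd lbl)) (rho y))) ys =
                map (lookup sg) ys).
    { assert (HL : map (lookup (combine (map rho ys) (snd lbl))) (map rho ys) = snd lbl).
      { apply lookup_combine. apply NoDup_map_inj; auto. rewrite length_map; auto. }
      transitivity (map (tsubst th) (map (lookup (combine (map rho ys) (snd lbl))) (map rho ys))).
      - rewrite !map_map. reflexivity.
      - rewrite HL. exact Hmap. }
    apply (map_eq_in _ _ _ _ E Hin).
  - rewrite lookup_combine_notin. simpl. apply Hout; auto. eapply in_vars_rule_body; eauto.
    intros H. apply in_map_iff in H. destruct H as [z [Hz Hz']]. apply Hinj in Hz. subst. auto.
Qed.

Definition build_res {Fsym Psym} (F : caba Fsym Psym) p0 (th : subst Fsym) p lbl g : Prop :=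
  (forall s, In s (subtrees (build F p0 p lbl g)) -> tight_local F s) /\
  root (build F p0 p lbl g) = option_map (fun _ => lbl) (root g) /\
  (forall b, In b (leaf_atoms (build F p0 p lbl g)) ->
     (Ap F (fst b) /\ In (asubst th b) (leaf_atoms g)) \/
     (Cp F (fst b) /\ entails F (asubst th b) /\ ground_atom (asubst th b))) /\
  (forall a, In a (leaf_atoms g) ->
     exists b, In b (leaf_atoms (build F p0 p lbl g)) /\ Ap F (fst b) /\ asubst th b = a).

Definition build_hyp {Fsym Psym} (F : caba Fsym Psym) p0 (th : subst Fsym) p lbl g : Prop :=
  (forall s, In s (subtrees g) -> ground_local F s) ->
  (forall a, root g = Some a -> asubst th lbl = a) ->
  (forall q rs, In (q, rs) (nodes F p0 p g) ->
     forall y, In y (vars_rule (fst rs)) -> lookup th (rhoP q y) = lookup (snd rs) y) ->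
  build_res F p0 th p lbl g.

Lemma kids_ok {Fsym Psym} (F : caba Fsym Psym) p0 th p lbl kids :
  Forall (fun k => forall p lbl, build_hyp F p0 th p lbl k) kids ->
  forall j bd bg,
  (forall k, In k kids -> forall s, In s (subtrees k) -> ground_local F s) ->
  Forall2 (fun l b => asubst th l = b) bd bg ->
  map (@root _ _ _) kids = map Some bg ->
  (forall q rs, In (q, rs) (concat (mapi2 (fun i (_ : unit) k => nodes F p0 (i :: p) k) tt j [] kids)) ->
     forall y, In y (vars_rule (fst rs)) -> lookup th (rhoP q y) = lookup (snd rs) y) ->
  let K := mapi2 (fun i l k => build F p0 (i :: p) l k) lbl j bd kids in
  (forall k', In k' K -> forall s, In s (subtrees k') -> tight_local F s) /\
  map (@root _ _ _) K = map Some bd /\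
  (forall b, In b (flat_map (@leaf_atoms _ _ _) K) ->
     (Ap F (fst b) /\ In (asubst th b) (flat_map (@leaf_atoms _ _ _) kids)) \/
     (Cp F (fst b) /\ entails F (asubst th b) /\ ground_atom (asubst th b))) /\
  (forall a, In a (flat_map (@leaf_atoms _ _ _) kids) ->
     exists b, In b (flat_map (@leaf_atoms _ _ _) K) /\ Ap F (fst b) /\ asubst th b = a).
Proof.
  induction 1 as [|k ks Hk Hks IHks]; intros j bd bg Hg HF2 Hroots Hth; simpl.
  - destruct bg; [|discriminate]. inversion HF2; subst. simpl.
    split; [tauto|split; [auto|split; tauto]].
  - destruct bg as [|b bg']; [discriminate|]. simpl in Hroots. injection Hroots as Hrk Hroots.
    inversion HF2 as [|l b' bd' bg'' Hlb HF2']; subst. simpl.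
    assert (Hk' : build_res F p0 th (j :: p) l k).
    { apply Hk. apply Hg; simpl; auto. intros a Ha. rewrite Hrk in Ha. injection Ha as <-. auto.
      intros q rs Hq. apply Hth. apply in_app_iff. auto. }
    destruct (IHks (S j) bd' bg') as [R1 [R2 [R3 R4]]]; auto.
    { intros k0 Hk0. apply Hg; simpl; auto. }
    { intros q rs Hq. apply Hth. apply in_app_iff. auto. }
    destruct Hk' as [K1 [K2 [K3 K4]]].
    split; [|split; [|split]].
    + intros k' [<-|Hk'']; [exact K1 | apply R1; exact Hk''].
    + rewrite K2, Hrk. simpl. f_equal. exact R2.
    + intros x Hx. apply in_app_iff in Hx. destruct Hx as [Hx|Hx].
      * destruct (K3 x Hx) as [[H1 H2]|H]; auto. left. split; auto. apply in_app_iff; auto.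
      * destruct (R3 x Hx) as [[H1 H2]|H]; auto. left. split; auto. apply in_app_iff; auto.
    + intros a Ha. apply in_app_iff in Ha. destruct Ha as [Ha|Ha].
      * destruct (K4 a Ha) as [x [Hx1 Hx2]]. exists x. split; auto. apply in_app_iff; auto.
      * destruct (R4 a Ha) as [x [Hx1 Hx2]]. exists x. split; auto. apply in_app_iff; auto.
Qed.

Lemma Forall2_map_map {A B C} (R : B -> C -> Prop) (f : A -> B) (g : A -> C) l :
  (forall x, In x l -> R (f x) (g x)) -> Forall2 R (map f l) (map g l).
Proof. induction l; simpl; intros H; constructor; auto. Qed.

Lemma build_ok {Fsym Psym} (F : caba Fsym Psym) p0 (th : subst Fsym) :
  wf_caba F -> forall g p lbl, build_hyp F p0 th p lbl g.
Proof.
  intros Hwf. pose proof Hwf as Hwf'.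
  destruct Hwf' as [_ [HAp [_ [_ [_ [_ [HRl _]]]]]]].
  induction g as [| a | a rg kids IH] using tree_ind2; intros p lbl Hg Hroot Hth.
  - unfold build_res. simpl. split; [|split; [|split]].
    + intros s [<-|[]]. simpl. auto.
    + auto.
    + cbn. tauto.
    + cbn. tauto.
  - unfold build_res. assert (Hl : ground_local F (TLeaf a)) by (apply Hg; simpl; auto).
    simpl in Hl. destruct Hl as [Hap Hgr].
    assert (Hla : asubst th lbl = a) by (apply Hroot; auto).
    assert (Hf : fst lbl = fst a) by (rewrite <- Hla; auto).
    simpl. split; [|split; [|split]].
    + intros s [<-|[]]. simpl. rewrite Hf. auto.
    + auto.
    + intros b. cbn. intros [<-|[]]. left. rewrite Hf, Hla. auto.
    + intros a'. cbn. intros [<-|[]]. exists lbl. rewrite Hf. auto.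
  - rewrite all_sub_node in Hg. destruct Hg as [Hloc Hgk].
    simpl in Hloc. destruct Hloc as [Hgr [Hhd Hkm]].
    assert (Hla : asubst th lbl = a) by (apply Hroot; auto).
    assert (Hf : fst lbl = fst a) by (rewrite <- Hla; auto).
    unfold build_res. simpl build. simpl nodes in Hth.
    destruct (excluded_middle_informative (Cp F (fst a))) as [HC|HC].
    +
      destruct Hgr as [[r [sg [HR [_ [Erg _]]]]]|[c [Hc [Hgc [Hent Erg]]]]].
      * exfalso. destruct (HRl r HR) as [_ [HnC _]]. apply HnC.
        rewrite <- Hhd in HC. rewrite Erg in HC. exact HC.
      * subst rg. simpl in Hhd. subst c. simpl in Hkm. subst kids.
        split; [|split; [|split]].
        -- intros s [<-|[]]. simpl. rewrite Hf. auto.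
        -- auto.
        -- intros b. cbn. intros [<-|[]]. right. rewrite Hf, Hla. auto.
        -- intros a'. rewrite leaf_atoms_node. cbn. tauto.
    +
      assert (Hspec : rs_spec F rg (choose F p0 rg)).
      { apply choose_spec. destruct Hgr as [[r [sg [HR [Hs [Erg Hgrd]]]]]|[c [Hc [_ [_ Erg]]]]].
        - exists (r, sg). repeat split; auto.
        - exfalso. apply HC. rewrite <- Hhd, Erg. auto. }
      set (rs := choose F p0 rg) in *. clearbody rs. destruct rs as [r sg].
      destruct Hspec as [HR [Hsub [Erg Hgrd]]]. simpl in HR, Hsub, Erg |- *.
      destruct (HRl r HR) as [_ [_ [_ [_ [[ys [Hys Hnd]] _]]]]].
      set (rho := rhoP p) in *.
      assert (Hinj : forall x y, rho x = rho y -> x = y).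
      { intros x y E. apply rhoP_inj in E. tauto. }
      assert (Hxs : xs_of (Defs.head (rename_rule rho r)) = map rho ys).
      { symmetry. apply xs_of_eq. apply rename_head. auto. }
      assert (Hha : asubstf (lookup sg) (Defs.head r) = a).
      { rewrite <- Hhd, Erg. reflexivity. }
      assert (Hsnd : map (tsubst th) (snd lbl) = map (lookup sg) ys).
      { rewrite <- Hla in Hha. unfold asubst, asubstf in Hha. injection Hha as _ E.
        rewrite Hys, map_map in E. simpl in E. unfold tsubst. rewrite <- E. reflexivity. }
      assert (Hlen : length ys = length (snd lbl)).
      { rewrite <- (length_map (tsubst th)), Hsnd, length_map. auto. }
      assert (Hfh : fst (Defs.head r) = fst lbl).
      { rewrite Hf, <- Hha. reflexivity. }
      assert (Hth0 : forall y, In y (vars_rule r) -> lookup th (rho y) = lookup sg y).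
      { intros y Hy. apply (Hth p (r, sg)); simpl; auto. }
      set (bd := map (asubst (theta_of lbl (rename_rule rho r))) (body (rename_rule rho r))).
      assert (HF2 : Forall2 (fun l b => asubst th l = b) bd (body rg)).
      { unfold bd. rewrite Erg. unfold rename_rule, rsubst, rsubstf. simpl.
        rewrite map_map. apply Forall2_map_map. intros b Hb.
        apply (@label_inst Fsym Psym th sg r rho lbl ys Hys Hnd Hinj Hlen Hsnd); auto. }
      assert (HK : (forall k', In k' (mapi2 (fun i l k => build F p0 (i :: p) l k) lbl 0 bd kids) ->
                     forall s, In s (subtrees k') -> tight_local F s) /\
                   kids_match bd (mapi2 (fun i l k => build F p0 (i :: p) l k) lbl 0 bd kids) /\
                   (forall b, In b (flat_map (@leaf_atoms _ _ _) (mapi2 (fun i l k => build F p0 (i :: p) l k) lbl 0 bd kids)) ->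
                      (Ap F (fst b) /\ In (asubst th b) (flat_map (@leaf_atoms _ _ _) kids)) \/
                      (Cp F (fst b) /\ entails F (asubst th b) /\ ground_atom (asubst th b))) /\
                   (forall a, In a (flat_map (@leaf_atoms _ _ _) kids) ->
                      exists b, In b (flat_map (@leaf_atoms _ _ _) (mapi2 (fun i l k => build F p0 (i :: p) l k) lbl 0 bd kids)) /\
                        Ap F (fst b) /\ asubst th b = a)).
      { assert (Ebd : bd = map (asubst (theta_of lbl (rename_rule rho r)))
                               (map (asubstf (fun x => Var (rho x))) (body r))) by reflexivity.
        assert (Ebg : body rg = map (asubstf (lookup sg)) (body r)) by (rewrite Erg; reflexivity).
        destruct (body r) as [|b0 bs] eqn:Eb.
        - simpl in Ebd, Ebg. rewrite Ebg in Hkm. simpl in Hkm. subst kids. rewrite Ebd. simpl.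
          split; [|split; [|split]].
          + intros k' [<-|[]] s [<-|[]]. simpl. auto.
          + auto.
          + cbn. tauto.
          + cbn. tauto.
        - assert (Hkm' : map (@root _ _ _) kids = map Some (body rg)).
          { rewrite Ebg in Hkm |- *. simpl in Hkm |- *. exact Hkm. }
          destruct (@kids_ok Fsym Psym F p0 th p lbl kids IH 0 bd (body rg) Hgk HF2 Hkm') as [R1 [R2 [R3 R4]]].
          { intros q rs Hq. apply Hth. simpl. auto. }
          split; [|split; [|split]]; auto.
          rewrite Ebd in R2 |- *. simpl in R2 |- *. exact R2. }
      destruct HK as [P1 [P2 [P3 P4]]].
      split; [|split; [|split]].
      * apply all_sub_node. split; auto. simpl. split; [auto|split; [auto|]].
        exists (xs_of (Defs.head (rename_rule rho r))). split; [|split; [|split]].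
        -- rewrite Hxs. apply rename_head. auto.
        -- simpl. auto.
        -- rewrite Hxs, length_map. auto.
        -- exact P2.
      * auto.
      * intros b Hb. rewrite (@leaf_atoms_node Fsym Psym (tnode Fsym Psym)) in Hb.
        rewrite (@leaf_atoms_node Fsym Psym (rule Fsym Psym)). auto.
      * intros a' Ha'. rewrite (@leaf_atoms_node Fsym Psym (tnode Fsym Psym)).
        rewrite (@leaf_atoms_node Fsym Psym (rule Fsym Psym)) in Ha'. auto.
Qed.

Definition mkth {Fsym Psym} (L : list (list nat * (rule Fsym Psym * subst Fsym))) : subst Fsym :=
  flat_map (fun n => map (fun y => (rhoP (fst n) y, lookup (snd (snd n)) y))
                         (nodup Nat.eq_dec (vars_rule (fst (snd n))))) L.

Lemma mkth_nodup {Fsym Psym} (L : list (list nat * (rule Fsym Psym * subst Fsym))) :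
  NoDup (map fst L) -> NoDup (map fst (mkth L)).
Proof.
  induction L as [|n L IH]; simpl; intros H; [constructor|]. inversion H; subst.
  unfold mkth. simpl. rewrite map_app. apply NoDup_app'.
  - rewrite map_map. simpl. apply NoDup_map_inj. intros x y E. apply rhoP_inj in E. tauto.
    apply NoDup_nodup.
  - apply IH; auto.
  - intros k Hk Hk'. rewrite map_map in Hk. apply in_map_iff in Hk. destruct Hk as [y [<- _]].
    apply in_map_iff in Hk'. destruct Hk' as [[k v] [Ek Hk']]. simpl in Ek. subst k.
    apply in_flat_map in Hk'. destruct Hk' as [m [Hm Hm']]. apply in_map_iff in Hm'.
    destruct Hm' as [z [Ez _]]. injection Ez as Ez _. apply rhoP_inj in Ez. destruct Ez as [Ez _].
    apply H2. rewrite <- Ez. apply in_map. auto.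
Qed.

Lemma mkth_lookup {Fsym Psym} (L : list (list nat * (rule Fsym Psym * subst Fsym))) q rs y :
  NoDup (map fst L) -> In (q, rs) L -> In y (vars_rule (fst rs)) ->
  lookup (mkth L) (rhoP q y) = lookup (snd rs) y.
Proof.
  intros H Hin Hy. apply lookup_in. apply mkth_nodup; auto.
  apply in_flat_map. exists (q, rs). split; auto. simpl. apply in_map_iff. exists y. split; auto.
  apply nodup_In. auto.
Qed.

Lemma FOP_map {A B} (R : B -> B -> Prop) (h : A -> B) (key : A -> list nat) (L : list A) :
  NoDup (map key L) -> (forall x y, In x L -> In y L -> key x <> key y -> R (h x) (h y)) ->
  ForallOrdPairs R (map h L).
Proof.
  induction L as [|x L IH]; simpl; intros Hnd HR; constructor.
  - apply Forall_forall. intros b Hb. apply in_map_iff in Hb. destruct Hb as [y [<- Hy]].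
    apply HR; auto. inversion Hnd; subst. intros E. apply H1. rewrite E. apply in_map; auto.
  - apply IH. inversion Hnd; auto. intros; apply HR; auto.
Qed.

Lemma leaf_in_sub {Fsym Psym N} (t : tree Fsym Psym N) a :
  In a (leaf_atoms t) -> In (TLeaf a) (subtrees t).
Proof.
  unfold leaf_atoms. intros H. apply in_flat_map in H. destruct H as [s [Hs H]].
  destruct s as [|b|]; simpl in H; try tauto. destruct H as [<-|[]]. auto.
Qed.

Lemma decb {P : Prop} : (if excluded_middle_informative P then true else false) = true <-> P.
Proof. destruct (excluded_middle_informative P); split; auto; discriminate. Qed.

Lemma asubst_nil {Fsym Psym} (a : atom Fsym Psym) : asubst [] a = a.
Proof. apply asubstf_Var. Qed.

Lemma consistent_entailed {Fsym Psym} (F : caba Fsym Psym) (l : list (atom Fsym Psym)) :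
  (forall c, In c l -> entails F c) -> consistent F l.
Proof.
  intros H M HM. pose proof HM as [[v0] _]. exists (fun _ => v0). intros c Hc. apply H; auto.
Qed.

Lemma consistent_entailed_s {Fsym Psym} (F : caba Fsym Psym) (s : nat -> term Fsym) (l : list (atom Fsym Psym)) :
  (forall c, In c l -> entails F (asubstf s c)) -> consistent F l.
Proof.
  intros H M HM. pose proof HM as [[v0] _]. exists (fun x => eval M (fun _ => v0) (s x)).
  intros c Hc. apply sat_asubstf. apply H; auto.
Qed.

Lemma root_props {Fsym Psym} (F : caba Fsym Psym) g c :
  wf_caba F -> (forall s, In s (subtrees g) -> ground_local F s) -> root g = Some c -> ~ Cp F (fst c) ->
  ground_atom c /\ Lp F (fst c).
Proof.
  intros Hwf Hg Hr HnC. destruct Hwf as [_ [HAp [_ [_ [_ [_ [HRl _]]]]]]].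
  destruct g as [|a|a rg kids]; simpl in Hr; try discriminate; injection Hr as <-.
  - assert (H : ground_local F (TLeaf a)) by (apply Hg; simpl; auto). simpl in H.
    split; [tauto|]. apply HAp; tauto.
  - assert (H : ground_local F (TNode a rg kids)) by (apply Hg; simpl; auto). simpl in H.
    destruct H as [[[r [sg [HR [_ [Erg Hgr]]]]]|[c [Hc [Hgc [_ Erg]]]]] [Hhd _]].
    + subst a. split.
      * unfold ground_rule, vars_rule in Hgr. apply app_eq_nil in Hgr. tauto.
      * rewrite Erg. exact (proj1 (HRl r HR)).
    + subst rg. simpl in Hhd. subst c. tauto.
Qed.

Lemma part2 {Fsym Psym} (F : caba Fsym Psym) :
  wf_caba F ->
  forall ga, Arg_c F ga -> ~ Cp F (fst (ga_claim ga)) ->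
     exists be, GrCInst_CArg F be /\ eq_mod_gc F be ga.
Proof.
  intros Hwf ga [g [Hroot [Hgl [Has Hrs]]]] HnC.
  pose proof Hwf as [_ [HAp [[p0 _] _]]].
  set (c := ga_claim ga) in *.
  destruct (@root_props Fsym Psym F g c Hwf Hgl Hroot HnC) as [Hgc HLc].
  set (L := nodes F p0 [] g).
  destruct (@nodes_paths Fsym Psym F p0 g []) as [HndL _]. fold L in HndL.
  set (th := mkth L).
  assert (Hth : forall q rs, In (q, rs) (nodes F p0 [] g) ->
     forall y, In y (vars_rule (fst rs)) -> lookup th (rhoP q y) = lookup (snd rs) y).
  { intros q rs Hq y Hy. apply mkth_lookup; auto. }
  assert (Hrc : forall a, root g = Some a -> asubst th c = a).
  { intros a Ha. rewrite Hroot in Ha. injection Ha as <-. apply asubstf_ground. auto. }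
  set (T := build F p0 [] c g).
  destruct (@build_ok Fsym Psym F p0 th Hwf g [] c Hgl Hrc Hth) as [A1 [A2 [A3 A4]]]. fold T in A1, A2, A3, A4.
  set (cs0 := filter (fun b => if excluded_middle_informative (Cp F (fst b)) then true else false) (leaf_atoms T)).
  set (as0 := filter (fun b => if excluded_middle_informative (Ap F (fst b)) then true else false) (leaf_atoms T)).
  assert (Hcs0 : forall x, In x cs0 <-> In x (leaf_atoms T) /\ Cp F (fst x)).
  { intros x. unfold cs0. rewrite filter_In, decb. tauto. }
  assert (Has0 : forall x, In x as0 <-> In x (leaf_atoms T) /\ Ap F (fst x)).
  { intros x. unfold as0. rewrite filter_In, decb. tauto. }
  assert (Hcsent : forall x, In x cs0 -> entails F (asubst th x) /\ ground_atom (asubst th x)).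
  { intros x Hx. apply Hcs0 in Hx. destruct Hx as [Hx HC].
    destruct (A3 x Hx) as [[HA _]|[_ H]]; auto. exfalso. apply (HAp _ HA). auto. }
  assert (Hasg : forall x, In x as0 -> In (asubst th x) (leaf_atoms g)).
  { intros x Hx. apply Has0 in Hx. destruct Hx as [Hx HA].
    destruct (A3 x Hx) as [[_ H]|[HC _]]; auto. exfalso. apply (HAp _ HA). auto. }
  set (al0 := mkCarg cs0 as0 (map fst (annots T)) c).
  set (be := mkCarg (map (asubst th) cs0 ++ []) (map (asubst th) as0) (map fst (annots T)) (asubst th c)).
  assert (Hbecs : forall x, In x (ca_cs be) -> entails F x /\ ground_atom x).
  { intros x Hx. simpl in Hx. rewrite app_nil_r in Hx. apply in_map_iff in Hx.
    destruct Hx as [y [<- Hy]]. auto. }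
  exists be. split.
  - exists be. split; [|split].
    + exists al0. split.
      * exists T. unfold is_tight. simpl. split; [|split; [|split; [|split; [|split; [|split; [|split; [|split]]]]]]].
        -- rewrite A2, Hroot. auto.
        -- auto.
        -- auto.
        -- exact A1.
        -- unfold renamed_apart. split.
           ++ unfold T. rewrite annots_build, map_map.
              apply (FOP_map _ _ (@fst _ _) _ HndL).
              intros [q [r sg]] [q' [r' sg']] _ _ Hne x Hx Hx'. simpl in *.
              unfold rename_rule, rsubstf, vars_rule in Hx, Hx'. simpl in Hx, Hx'.
              assert (Hv : forall q0 (r0 : rule Fsym Psym) z,
                  In z (vars_atom (asubstf (fun x0 => Var (rhoP q0 x0)) (Defs.head r0)) ++
                        flat_map (@vars_atom _ _) (map (asubstf (fun x0 => Var (rhoP q0 x0))) (body r0))) ->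
                  exists w, z = rhoP q0 w).
              { intros q0 r0 z Hz. apply in_app_iff in Hz. destruct Hz as [Hz|Hz].
                - apply vars_asubstf in Hz. destruct Hz as [w [_ [<-|[]]]]. eauto.
                - apply in_flat_map in Hz. destruct Hz as [b [Hb Hz]]. apply in_map_iff in Hb.
                  destruct Hb as [b' [<- _]]. apply vars_asubstf in Hz.
                  destruct Hz as [w [_ [<-|[]]]]. eauto. }
              destruct (Hv _ _ _ Hx) as [w ->]. destruct (Hv _ _ _ Hx') as [w' E].
              apply rhoP_inj in E. tauto.
           ++ intros r x _ _. unfold ground_atom in Hgc. rewrite Hgc. simpl. auto.
        -- exact Hcs0.
        -- exact Has0.
        -- intros r. split.
           ++ intros Hr. apply in_map_iff in Hr. destruct Hr as [[r' rho] [E Hr]]. simpl in E. subst.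
              eauto.
           ++ intros [rho Hr]. apply in_map_iff. exists (r, rho). auto.
        -- apply consistent_entailed_s with (s := lookup th). intros x Hx. apply Hcsent. auto.
      * exists th, []. split; [|split; [|split]].
        -- apply mkth_nodup. auto.
        -- simpl. tauto.
        -- apply consistent_entailed. apply Hbecs.
        -- reflexivity.
    + exists [], []. split; [|split; [|split]].
      * constructor.
      * simpl. tauto.
      * apply consistent_entailed. intros x Hx. rewrite app_nil_r in Hx.
        apply in_map_iff in Hx. destruct Hx as [y [<- Hy]]. rewrite asubst_nil. apply Hbecs; auto.
      * assert (Hm : forall l : list (atom Fsym Psym), map (asubst []) l = l).
        { induction l as [|x l IHl]; simpl; auto. rewrite asubst_nil, IHl. auto. }
        unfold be. simpl. rewrite !Hm, asubst_nil, !app_nil_r. reflexivity.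
    + unfold ground_carg. split; [|split].
      * intros x Hx. apply Hbecs; auto.
      * intros x Hx. simpl in Hx. apply in_map_iff in Hx. destruct Hx as [y [<- Hy]].
        apply Hasg in Hy. apply leaf_in_sub in Hy. apply Hgl in Hy. simpl in Hy. tauto.
      * simpl. unfold asubst. rewrite asubstf_ground; auto.
  - unfold eq_mod_gc. simpl. split.
    + split.
      * intros x Hx. apply in_map_iff in Hx. destruct Hx as [y [<- Hy]].
        exists (asubst th y). split; [|apply atom_equiv_refl]. apply Has. auto.
      * intros a' Ha'. apply Has in Ha'. destruct (A4 a' Ha') as [b [Hb [HA Eb]]].
        exists a'. split; [|apply atom_equiv_refl]. rewrite <- Eb. apply in_map. apply Has0. auto.
    + unfold asubst. rewrite asubstf_ground by auto. apply atom_equiv_refl.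
Qed.

Theorem theorem5p12 (Fsym Psym : Type) (F : caba Fsym Psym) :
  wf_caba F ->
  (exists t : term Fsym, ground_term t) ->
  (forall be, GrCInst_CArg F be ->
     exists ga, Arg_c F ga /\ eq_mod_gc F be ga) /\
  (forall ga, Arg_c F ga -> ~ Cp F (fst (ga_claim ga)) ->
     exists be, GrCInst_CArg F be /\ eq_mod_gc F be ga).
Proof.
  intros Hwf Ht. split.
  - apply part1; auto.
  - apply part2; auto.
Qed.
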